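(* Let $m_1,m_2,n_1\in\mathbb Z_+$. Then $$|\mathcal S(m_1,m_2,n_1)|=|\mathcal S(m_1-1,m_2,n_1-1)|+|{}^1\mathcal S(m_1+1,m_2-1,n_1-1)|+|{}^2\mathcal S(m_1-1,m_2,n_1-1)|+|{}^3\mathcal S(m_1,m_2,n_1)|,$$ where $|{}^1\mathcal S|:=|R^1|+|R^2|$, $|{}^2\mathcal S|:=|Q^1|+|Q^2|$, $|{}^3\mathcal S|:=|U^1|+|U^2|$ (all evaluated at the same parameters).
   Context: (Type $G_2$ with $\mu(h_2)=0$: here $m_i=\lambda(h_i)$, $n_1=\mu(h_1)$, and $\mathcal S(m_1,m_2,n_1)$ is the lattice point set $\mathcal S^G_{\lambda,\mu}$ of the paper's polytope with $n_2=0$.) For arbitrary integers $m_1,m_2,n_1$ define: $\mathcal S(m_1,m_2,n_1)=\{(a,b,c,d,e,f)\in\mathbb Z_+^6: a\le\min\{m_1,n_1\},\ b\le m_2,\ f\le\min\{m_2,0\},\ b+e-a\le m_2,\ a+c+d\le\min\{m_1+m_2,n_1\},\ a+b+c\le\min\{m_1+m_2,n_1\},\ a+b+c+d\le\min\{m_1+2m_2,n_1\},\ b+c+d+e\le\min\{m_1+2m_2,n_1\},\ 2(a+c)+3d-b\le m_1+n_1,\ 2(a+c)+b+d\le m_1+n_1\}$; $R^1(m_1,m_2,n_1)=\{(b,c,d,e)\in\mathbb Z_+^4: b+e\le m_2,\ c+d\le m_1+m_2,\ b+c\le m_1+m_2,\ b+c+d+e\le n_1,\ 2c+3d-b\le m_1+n_1,\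 b+2c+d\le m_1+n_1\}$; $R^2(m_1,m_2,n_1)=\{(a,b,c,d)\in\mathbb Z_+^4: a<m_1,\ b\le m_2,\ a+c+d<m_1+m_2,\ a+b+c<m_1+m_2,\ a+b+c+d<n_1,\ 2a+2c+3d-b<m_1+n_1-1,\ 2a+b+2c+d<m_1+n_1-1\}$; $Q^1(m_1,m_2,n_1)=\{(a,c,d)\in\mathbb Z_+^3: a\le m_1,\ a+c+d\le\min\{m_1+m_2,n_1\},\ 2(a+c)+3d\le m_1+n_1\}$; $Q^2(m_1,m_2,n_1)=\{(a,b,c)\in\mathbb Z_+^3: a\le m_1,\ a+b+c\le\min\{m_1+m_2-1,n_1-1\},\ b\le m_2-1,\ 2(a+c)+b\le m_1+n_1-1\}$; $U^1(m_1,m_2,n_1)=\{(c,d)\in\mathbb Z_+^2: c+d\le\min\{m_1+m_2,n_1\},\ 2c+3d\le m_1+n_1\}$; $U^2(m_1,m_2,n_1)=\{(b,c)\in\mathbb Z_+^2: b+c<\min\{m_1+m_2,n_1\},\ b<m_2,\ 2c+b<m_1+n_1\}$. *)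

(* Defs.v *)
(* Parameters are integers (they may become negative,
   e.g. m1 - 1 with m1 = 0); points are tuples of natural numbers (Z_+). *)
From mathcomp Require Import all_boot all_order all_algebra.
Set Implicit Arguments. Unset Strict Implicit. Unset Printing Implicit Defensive.
Import Order.TTheory GRing.Theory Num.Theory.
Local Open Scope ring_scope.

Definition inS (m1 m2 n1 : int) (a b c d e f : nat) : bool :=
  [&& (a%:Z <= Num.min m1 n1), (b%:Z <= m2), (f%:Z <= Num.min m2 0),
      (b%:Z + e%:Z - a%:Z <= m2),
      (a%:Z + c%:Z + d%:Z <= Num.min (m1 + m2) n1),
      (a%:Z + b%:Z + c%:Z <= Num.min (m1 + m2) n1),
      (a%:Z + b%:Z + c%:Z + d%:Z <= Num.min (m1 + 2 * m2) n1),
      (b%:Z + c%:Z + d%:Z + e%:Z <= Num.min (m1 + 2 * m2) n1),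
      (2 * (a%:Z + c%:Z) + 3 * d%:Z - b%:Z <= m1 + n1) &
      (2 * (a%:Z + c%:Z) + b%:Z + d%:Z <= m1 + n1)].

Definition inR1 (m1 m2 n1 : int) (b c d e : nat) : bool :=
  [&& (b%:Z + e%:Z <= m2), (c%:Z + d%:Z <= m1 + m2), (b%:Z + c%:Z <= m1 + m2),
      (b%:Z + c%:Z + d%:Z + e%:Z <= n1),
      (2 * c%:Z + 3 * d%:Z - b%:Z <= m1 + n1) &
      (b%:Z + 2 * c%:Z + d%:Z <= m1 + n1)].

Definition inR2 (m1 m2 n1 : int) (a b c d : nat) : bool :=
  [&& (a%:Z < m1), (b%:Z <= m2), (a%:Z + c%:Z + d%:Z < m1 + m2),
      (a%:Z + b%:Z + c%:Z < m1 + m2), (a%:Z + b%:Z + c%:Z + d%:Z < n1),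
      (2 * a%:Z + 2 * c%:Z + 3 * d%:Z - b%:Z < m1 + n1 - 1) &
      (2 * a%:Z + b%:Z + 2 * c%:Z + d%:Z < m1 + n1 - 1)].

Definition inQ1 (m1 m2 n1 : int) (a c d : nat) : bool :=
  [&& (a%:Z <= m1), (a%:Z + c%:Z + d%:Z <= Num.min (m1 + m2) n1) &
      (2 * (a%:Z + c%:Z) + 3 * d%:Z <= m1 + n1)].

Definition inQ2 (m1 m2 n1 : int) (a b c : nat) : bool :=
  [&& (a%:Z <= m1), (a%:Z + b%:Z + c%:Z <= Num.min (m1 + m2 - 1) (n1 - 1)),
      (b%:Z <= m2 - 1) & (2 * (a%:Z + c%:Z) + b%:Z <= m1 + n1 - 1)].

Definition inU1 (m1 m2 n1 : int) (c d : nat) : bool :=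
  (c%:Z + d%:Z <= Num.min (m1 + m2) n1) && (2 * c%:Z + 3 * d%:Z <= m1 + n1).

Definition inU2 (m1 m2 n1 : int) (b c : nat) : bool :=
  [&& (b%:Z + c%:Z < Num.min (m1 + m2) n1), (b%:Z < m2) &
      (2 * c%:Z + b%:Z < m1 + n1)].

(* A box 'I_(bnd) in each coordinate that contains all points of every
   set above (see the lemmas inS_bound, ... below). *)
Definition bnd (m1 m2 n1 : int) : nat :=
  (`|m1| + `|m2| + `|n1| + 1)%N.

Definition cardS (m1 m2 n1 : int) : nat :=
  (\sum_(a < bnd m1 m2 n1) \sum_(b < bnd m1 m2 n1) \sum_(c < bnd m1 m2 n1)
   \sum_(d < bnd m1 m2 n1) \sum_(e < bnd m1 m2 n1) \sum_(f < bnd m1 m2 n1)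
     inS m1 m2 n1 a b c d e f)%N.
Definition cardR1 (m1 m2 n1 : int) : nat :=
  (\sum_(b < bnd m1 m2 n1) \sum_(c < bnd m1 m2 n1) \sum_(d < bnd m1 m2 n1)
   \sum_(e < bnd m1 m2 n1) inR1 m1 m2 n1 b c d e)%N.
Definition cardR2 (m1 m2 n1 : int) : nat :=
  (\sum_(a < bnd m1 m2 n1) \sum_(b < bnd m1 m2 n1) \sum_(c < bnd m1 m2 n1)
   \sum_(d < bnd m1 m2 n1) inR2 m1 m2 n1 a b c d)%N.
Definition cardQ1 (m1 m2 n1 : int) : nat :=
  (\sum_(a < bnd m1 m2 n1) \sum_(c < bnd m1 m2 n1) \sum_(d < bnd m1 m2 n1)
     inQ1 m1 m2 n1 a c d)%N.
Definition cardQ2 (m1 m2 n1 : int) : nat :=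
  (\sum_(a < bnd m1 m2 n1) \sum_(b < bnd m1 m2 n1) \sum_(c < bnd m1 m2 n1)
     inQ2 m1 m2 n1 a b c)%N.
Definition cardU1 (m1 m2 n1 : int) : nat :=
  (\sum_(c < bnd m1 m2 n1) \sum_(d < bnd m1 m2 n1) inU1 m1 m2 n1 c d)%N.
Definition cardU2 (m1 m2 n1 : int) : nat :=
  (\sum_(b < bnd m1 m2 n1) \sum_(c < bnd m1 m2 n1) inU2 m1 m2 n1 b c)%N.

Definition card1S m1 m2 n1 := (cardR1 m1 m2 n1 + cardR2 m1 m2 n1)%N.
Definition card2S m1 m2 n1 := (cardQ1 m1 m2 n1 + cardQ2 m1 m2 n1)%N.
Definition card3S m1 m2 n1 := (cardU1 m1 m2 n1 + cardU2 m1 m2 n1)%N.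

(* Main.v *)
Require Import Defs.
From mathcomp Require Import all_boot all_order all_algebra zify.
Import Order.TTheory GRing.Theory Num.Theory.
Local Open Scope ring_scope.

Lemma sum_ext B N (F : nat -> nat) : (B <= N)%N -> (forall i, (B <= i)%N -> F i = 0%N) ->
  (\sum_(i<B) F i = \sum_(i<N) F i)%N.
Proof.
move=> BN H; rewrite -(subnKC BN) big_split_ord /= [X in (_ + X)%N]big1 ?addn0 //.
by move=> i _; apply: H; rewrite leq_addr.
Qed.

Lemma ext2 B N (P : nat -> nat -> nat) : (B <= N)%N ->
  (forall x y, ((B <= x) || (B <= y))%N -> P x y = 0%N) ->
  (\sum_(x<B)\sum_(y<B) P x y = \sum_(x<N)\sum_(y<N) P x y)%N.
Proof.
move=> BN H; rewrite (@sum_ext B N (fun x => \sum_(y<B) P x y)) //.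
  by apply: eq_bigr => x _; apply: sum_ext => // y hy; apply: H; rewrite hy orbT.
by move=> x hx; apply: big1 => y _; apply: H; rewrite hx.
Qed.

Lemma ext3 B N (P : nat -> nat -> nat -> nat) : (B <= N)%N ->
  (forall x y z, [|| B <= x, B <= y | B <= z]%N -> P x y z = 0%N) ->
  (\sum_(x<B)\sum_(y<B)\sum_(z<B) P x y z = \sum_(x<N)\sum_(y<N)\sum_(z<N) P x y z)%N.
Proof.
move=> BN H; rewrite (@sum_ext B N (fun x => \sum_(y<B)\sum_(z<B) P x y z)) //.
  apply: eq_bigr => x _; apply: ext2 => // y z hy; apply: H; rewrite hy orbT //.
by move=> x hx; apply: big1 => y _; apply: big1 => z _; apply: H; rewrite hx.
Qed.

Lemma ext4 B N (P : nat -> nat -> nat -> nat -> nat) : (B <= N)%N ->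
  (forall x y z w, [|| B <= x, B <= y, B <= z | B <= w]%N -> P x y z w = 0%N) ->
  (\sum_(x<B)\sum_(y<B)\sum_(z<B)\sum_(w<B) P x y z w =
   \sum_(x<N)\sum_(y<N)\sum_(z<N)\sum_(w<N) P x y z w)%N.
Proof.
move=> BN H; rewrite (@sum_ext B N (fun x => \sum_(y<B)\sum_(z<B)\sum_(w<B) P x y z w)) //.
  apply: eq_bigr => x _; apply: ext3 => // y z w hy; apply: H; rewrite hy orbT //.
by move=> x hx; apply: big1 => y _; apply: big1 => z _; apply: big1 => w _; apply: H; rewrite hx.
Qed.

Lemma ext5 B N (P : nat -> nat -> nat -> nat -> nat -> nat) : (B <= N)%N ->
  (forall x y z w v, [|| B <= x, B <= y, B <= z, B <= w | B <= v]%N -> P x y z w v = 0%N) ->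
  (\sum_(x<B)\sum_(y<B)\sum_(z<B)\sum_(w<B)\sum_(v<B) P x y z w v =
   \sum_(x<N)\sum_(y<N)\sum_(z<N)\sum_(w<N)\sum_(v<N) P x y z w v)%N.
Proof.
move=> BN H; rewrite (@sum_ext B N (fun x => \sum_(y<B)\sum_(z<B)\sum_(w<B)\sum_(v<B) P x y z w v)) //.
  apply: eq_bigr => x _; apply: ext4 => // y z w v hy; apply: H; rewrite hy orbT //.
by move=> x hx; apply: big1 => y _; apply: big1 => z _; apply: big1 => w _;
  apply: big1 => v _; apply: H; rewrite hx.
Qed.

Lemma cardS_N m1 m2 n1 N : 0 <= m2 -> (bnd m1 m2 n1 <= N)%N ->
  cardS m1 m2 n1 = (\sum_(a<N)\sum_(b<N)\sum_(c<N)\sum_(d<N)\sum_(e<N)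
     inS m1 m2 n1 a b c d e 0)%N.
Proof.
move=> hm2 hN.
have Hf : forall a b c d e, (\sum_(f < bnd m1 m2 n1) inS m1 m2 n1 a b c d e f =
    inS m1 m2 n1 a b c d e 0)%N.
  move=> a b c d e; rewrite /bnd addn1 big_ord_recl big1 ?addn0 // => f _.
  rewrite /inS /= /bump /=; lia.
rewrite /cardS.
rewrite (eq_bigr (fun a : 'I_(bnd m1 m2 n1) =>
  \sum_(b < bnd m1 m2 n1) \sum_(c < bnd m1 m2 n1) \sum_(d < bnd m1 m2 n1)
  \sum_(e < bnd m1 m2 n1) inS m1 m2 n1 a b c d e 0))%N; last first.
  move=> a _; apply: eq_bigr => b _; apply: eq_bigr => c _; apply: eq_bigr => d _;
  apply: eq_bigr => e _; exact: Hf.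
apply: (@ext5 _ _ (fun a b c d e => nat_of_bool (inS m1 m2 n1 a b c d e 0))) => // a b c d e; rewrite /bnd /inS; lia.
Qed.

Lemma cardR1_N m1 m2 n1 N : (bnd m1 m2 n1 <= N)%N ->
  cardR1 m1 m2 n1 = (\sum_(b<N)\sum_(c<N)\sum_(d<N)\sum_(e<N) inR1 m1 m2 n1 b c d e)%N.
Proof. move=> hN; apply: (@ext4 _ _ (fun a b c d => nat_of_bool (inR1 m1 m2 n1 a b c d))) => // ????; rewrite /bnd /inR1; lia. Qed.
Lemma cardR2_N m1 m2 n1 N : (bnd m1 m2 n1 <= N)%N ->
  cardR2 m1 m2 n1 = (\sum_(a<N)\sum_(b<N)\sum_(c<N)\sum_(d<N) inR2 m1 m2 n1 a b c d)%N.
Proof. move=> hN; apply: (@ext4 _ _ (fun a b c d => nat_of_bool (inR2 m1 m2 n1 a b c d))) => // ????; rewrite /bnd /inR2; lia. Qed.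
Lemma cardQ1_N m1 m2 n1 N : (bnd m1 m2 n1 <= N)%N ->
  cardQ1 m1 m2 n1 = (\sum_(a<N)\sum_(c<N)\sum_(d<N) inQ1 m1 m2 n1 a c d)%N.
Proof. move=> hN; apply: (@ext3 _ _ (fun a b c => nat_of_bool (inQ1 m1 m2 n1 a b c))) => // ???; rewrite /bnd /inQ1; lia. Qed.
Lemma cardQ2_N m1 m2 n1 N : (bnd m1 m2 n1 <= N)%N ->
  cardQ2 m1 m2 n1 = (\sum_(a<N)\sum_(b<N)\sum_(c<N) inQ2 m1 m2 n1 a b c)%N.
Proof. move=> hN; apply: (@ext3 _ _ (fun a b c => nat_of_bool (inQ2 m1 m2 n1 a b c))) => // ???; rewrite /bnd /inQ2; lia. Qed.
Lemma cardU1_N m1 m2 n1 N : (bnd m1 m2 n1 <= N)%N ->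
  Defs.cardU1 m1 m2 n1 = (\sum_(c<N)\sum_(d<N) inU1 m1 m2 n1 c d)%N.
Proof. move=> hN; apply: (@ext2 _ _ (fun a b => nat_of_bool (inU1 m1 m2 n1 a b))) => // ??; rewrite /bnd /inU1; lia. Qed.
Lemma cardU2_N m1 m2 n1 N : (bnd m1 m2 n1 <= N)%N ->
  Defs.cardU2 m1 m2 n1 = (\sum_(b<N)\sum_(c<N) inU2 m1 m2 n1 b c)%N.
Proof. move=> hN; apply: (@ext2 _ _ (fun a b => nat_of_bool (inU2 m1 m2 n1 a b))) => // ??; rewrite /bnd /inU2; lia. Qed.

Lemma rec0 N (F : nat -> nat) : (0 < N)%N -> F N = 0%N ->
  (\sum_(i<N) F i = F 0%N + \sum_(i<N) F i.+1)%N.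
Proof. case: N => // N _ HF. by rewrite big_ord_recl big_ord_recr /= HF addn0. Qed.

Lemma rec1 N (G : nat -> nat -> nat) : (0 < N)%N -> (forall x, G x N = 0%N) ->
  (\sum_(x<N)\sum_(y<N) G x y = \sum_(x<N) G x 0%N + \sum_(x<N)\sum_(y<N) G x y.+1)%N.
Proof. move=> hN H; rewrite -big_split; apply: eq_bigr => x _; exact: rec0. Qed.

Lemma rec2 N (G : nat -> nat -> nat -> nat) : (0 < N)%N -> (forall x y, G x y N = 0%N) ->
  (\sum_(x<N)\sum_(y<N)\sum_(z<N) G x y z =
   \sum_(x<N)\sum_(y<N) G x y 0%N + \sum_(x<N)\sum_(y<N)\sum_(z<N) G x y z.+1)%N.
Proof. move=> hN H; rewrite -big_split; apply: eq_bigr => x _; exact: rec1. Qed.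

Lemma rec3 N (G : nat -> nat -> nat -> nat -> nat) : (0 < N)%N ->
  (forall x y z, G x y z N = 0%N) ->
  (\sum_(x<N)\sum_(y<N)\sum_(z<N)\sum_(w<N) G x y z w =
   \sum_(x<N)\sum_(y<N)\sum_(z<N) G x y z 0%N +
   \sum_(x<N)\sum_(y<N)\sum_(z<N)\sum_(w<N) G x y z w.+1)%N.
Proof. move=> hN H; rewrite -big_split; apply: eq_bigr => x _; exact: rec2. Qed.

Lemma rec4 N (G : nat -> nat -> nat -> nat -> nat -> nat) : (0 < N)%N ->
  (forall x y z w, G x y z w N = 0%N) ->
  (\sum_(x<N)\sum_(y<N)\sum_(z<N)\sum_(w<N)\sum_(v<N) G x y z w v =
   \sum_(x<N)\sum_(y<N)\sum_(z<N)\sum_(w<N) G x y z w 0%N +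
   \sum_(x<N)\sum_(y<N)\sum_(z<N)\sum_(w<N)\sum_(v<N) G x y z w v.+1)%N.
Proof. move=> hN H; rewrite -big_split; apply: eq_bigr => x _; exact: rec3. Qed.

Theorem lemma6p5 (m1 m2 n1 : nat) :
  cardS m1%:Z m2%:Z n1%:Z =
  (cardS (m1%:Z - 1) m2%:Z (n1%:Z - 1)
   + card1S (m1%:Z + 1) (m2%:Z - 1) (n1%:Z - 1)
   + card2S (m1%:Z - 1) m2%:Z (n1%:Z - 1)
   + card3S m1%:Z m2%:Z n1%:Z)%N.
Proof.
set N := (m1 + m2 + n1 + 10)%N.
have hN : (0 < N)%N by rewrite /N; lia.
rewrite /card1S /card2S /card3S.
rewrite (@cardS_N _ _ _ N) ?(@cardS_N (m1%:Z - 1) _ _ N)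
  ?(@cardR1_N _ _ _ N) ?(@cardR2_N _ _ _ N) ?(@cardQ1_N _ _ _ N) ?(@cardQ2_N _ _ _ N)
  ?(@cardU1_N _ _ _ N) ?(@cardU2_N _ _ _ N); try (rewrite /bnd /N; lia).
set s := fun a b c d e => nat_of_bool (inS m1%:Z m2%:Z n1%:Z a b c d e 0).
have Hs : forall a b c d e, (N <= a.+1)%N \/ (N <= b.+1)%N \/ (N <= c.+1)%N \/
   (N <= d.+1)%N \/ (N <= e.+1)%N -> s a b c d e = 0%N.
  move=> a b c d e; rewrite /s /N /inS; lia.
Ltac zt Hs := intros; repeat (apply: big1 => ? _); apply: Hs; lia.
have E1 : (\sum_(a<N)\sum_(b<N)\sum_(c<N)\sum_(d<N)\sum_(e<N) s a b c d e =
   \sum_(a<N)\sum_(b<N)\sum_(c<N)\sum_(d<N) s a b c d 0 +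
   \sum_(a<N)\sum_(b<N)\sum_(c<N)\sum_(d<N)\sum_(e<N) s a b c d e.+1)%N.
  by apply: rec4 => //; zt Hs.
have E2 : (\sum_(a<N)\sum_(b<N)\sum_(c<N)\sum_(d<N)\sum_(e<N) s a b c d e.+1 =
   \sum_(b<N)\sum_(c<N)\sum_(d<N)\sum_(e<N) s 0 b c d e.+1 +
   \sum_(a<N)\sum_(b<N)\sum_(c<N)\sum_(d<N)\sum_(e<N) s a.+1 b c d e.+1)%N.
  by apply: (@rec0 N (fun a => \sum_(b<N)\sum_(c<N)\sum_(d<N)\sum_(e<N) s a b c d e.+1)) => //; zt Hs.
have E3 : (\sum_(a<N)\sum_(b<N)\sum_(c<N)\sum_(d<N) s a b c d 0 =
   \sum_(b<N)\sum_(c<N)\sum_(d<N) s 0 b c d 0 +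
   \sum_(a<N)\sum_(b<N)\sum_(c<N)\sum_(d<N) s a.+1 b c d 0)%N.
  by apply: (@rec0 N (fun a => \sum_(b<N)\sum_(c<N)\sum_(d<N) s a b c d 0)) => //; zt Hs.
have E4 : (\sum_(b<N)\sum_(c<N)\sum_(d<N) s 0 b c d 0 =
   \sum_(c<N)\sum_(d<N) s 0 0 c d 0 +
   \sum_(b<N)\sum_(c<N)\sum_(d<N) s 0 b.+1 c d 0)%N.
  by apply: (@rec0 N (fun b => \sum_(c<N)\sum_(d<N) s 0 b c d 0)) => //; zt Hs.
have E5 : (\sum_(b<N)\sum_(c<N)\sum_(d<N) s 0 b.+1 c d 0 =
   \sum_(b<N)\sum_(c<N) s 0 b.+1 c 0 0 +
   \sum_(b<N)\sum_(c<N)\sum_(d<N) s 0 b.+1 c d.+1 0)%N.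
  by apply: (@rec2 N (fun b c d => s 0 b.+1 c d 0)) => //; zt Hs.
have E6 : (\sum_(a<N)\sum_(b<N)\sum_(c<N)\sum_(d<N) s a.+1 b c d 0 =
   \sum_(a<N)\sum_(c<N)\sum_(d<N) s a.+1 0 c d 0 +
   \sum_(a<N)\sum_(b<N)\sum_(c<N)\sum_(d<N) s a.+1 b.+1 c d 0)%N.
  by apply: (@rec1 N (fun a b => \sum_(c<N)\sum_(d<N) s a.+1 b c d 0)) => //; zt Hs.
have E7 : (\sum_(a<N)\sum_(b<N)\sum_(c<N)\sum_(d<N) s a.+1 b.+1 c d 0 =
   \sum_(a<N)\sum_(b<N)\sum_(c<N) s a.+1 b.+1 c 0 0 +
   \sum_(a<N)\sum_(b<N)\sum_(c<N)\sum_(d<N) s a.+1 b.+1 c d.+1 0)%N.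
  by apply: (@rec3 N (fun a b c d => s a.+1 b.+1 c d 0)) => //; zt Hs.
have E8 : (\sum_(a<N)\sum_(b<N)\sum_(c<N)\sum_(d<N) s a b.+1 c d.+1 0 =
   \sum_(b<N)\sum_(c<N)\sum_(d<N) s 0 b.+1 c d.+1 0 +
   \sum_(a<N)\sum_(b<N)\sum_(c<N)\sum_(d<N) s a.+1 b.+1 c d.+1 0)%N.
  by apply: (@rec0 N (fun a => \sum_(b<N)\sum_(c<N)\sum_(d<N) s a b.+1 c d.+1 0)) => //; zt Hs.
have P1 : (\sum_(a<N)\sum_(b<N)\sum_(c<N)\sum_(d<N)\sum_(e<N) s a.+1 b c d e.+1 =
   \sum_(a<N)\sum_(b<N)\sum_(c<N)\sum_(d<N)\sum_(e<N) inS (m1%:Z - 1) m2%:Z (n1%:Z - 1) a b c d e 0)%N.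
  apply: eq_bigr => a _; apply: eq_bigr => b _; apply: eq_bigr => c _; apply: eq_bigr => d _;
  apply: eq_bigr => e _; rewrite /s /inS; lia.
have P2 : (\sum_(b<N)\sum_(c<N)\sum_(d<N)\sum_(e<N) s 0 b c d e.+1 =
   \sum_(b<N)\sum_(c<N)\sum_(d<N)\sum_(e<N) inR1 (m1%:Z + 1) (m2%:Z - 1) (n1%:Z - 1) b c d e)%N.
  apply: eq_bigr => b _; apply: eq_bigr => c _; apply: eq_bigr => d _;
  apply: eq_bigr => e _; rewrite /s /inS /inR1; lia.
have P3 : (\sum_(a<N)\sum_(b<N)\sum_(c<N)\sum_(d<N) s a b.+1 c d.+1 0 =
   \sum_(a<N)\sum_(b<N)\sum_(c<N)\sum_(d<N) inR2 (m1%:Z + 1) (m2%:Z - 1) (n1%:Z - 1) a b c d)%N.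
  apply: eq_bigr => a _; apply: eq_bigr => b _; apply: eq_bigr => c _;
  apply: eq_bigr => d _; rewrite /s /inS /inR2; lia.
have P4 : (\sum_(a<N)\sum_(c<N)\sum_(d<N) s a.+1 0 c d 0 =
   \sum_(a<N)\sum_(c<N)\sum_(d<N) inQ1 (m1%:Z - 1) m2%:Z (n1%:Z - 1) a c d)%N.
  apply: eq_bigr => a _; apply: eq_bigr => c _; apply: eq_bigr => d _;
  rewrite /s /inS /inQ1; lia.
have P5 : (\sum_(a<N)\sum_(b<N)\sum_(c<N) s a.+1 b.+1 c 0 0 =
   \sum_(a<N)\sum_(b<N)\sum_(c<N) inQ2 (m1%:Z - 1) m2%:Z (n1%:Z - 1) a b c)%N.
  apply: eq_bigr => a _; apply: eq_bigr => b _; apply: eq_bigr => c _;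
  rewrite /s /inS /inQ2; lia.
have P6 : (\sum_(c<N)\sum_(d<N) s 0 0 c d 0 =
   \sum_(c<N)\sum_(d<N) inU1 m1%:Z m2%:Z n1%:Z c d)%N.
  apply: eq_bigr => c _; apply: eq_bigr => d _; rewrite /s /inS /inU1; lia.
have P7 : (\sum_(b<N)\sum_(c<N) s 0 b.+1 c 0 0 =
   \sum_(b<N)\sum_(c<N) inU2 m1%:Z m2%:Z n1%:Z b c)%N.
  apply: eq_bigr => b _; apply: eq_bigr => c _; rewrite /s /inS /inU2; lia.
rewrite -P1 -P2 -P3 -P4 -P5 -P6 -P7 E8.
change (\sum_(a<N)\sum_(b<N)\sum_(c<N)\sum_(d<N)\sum_(e<N) s a b c d e =
  \sum_(a<N)\sum_(b<N)\sum_(c<N)\sum_(d<N)\sum_(e<N) s a.+1 b c d e.+1 +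
  (\sum_(b<N)\sum_(c<N)\sum_(d<N)\sum_(e<N) s 0 b c d e.+1 +
   (\sum_(b<N)\sum_(c<N)\sum_(d<N) s 0 b.+1 c d.+1 0 +
    \sum_(a<N)\sum_(b<N)\sum_(c<N)\sum_(d<N) s a.+1 b.+1 c d.+1 0)) +
  (\sum_(a<N)\sum_(c<N)\sum_(d<N) s a.+1 0 c d 0 +
   \sum_(a<N)\sum_(b<N)\sum_(c<N) s a.+1 b.+1 c 0 0) +
  (\sum_(c<N)\sum_(d<N) s 0 0 c d 0 + \sum_(b<N)\sum_(c<N) s 0 b.+1 c 0 0))%N.
rewrite E1 E2 E3 E4 E5 E6 E7; lia.
Qed.
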